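(* Let $R$ be a commutative ring of Krull dimension zero. Then every faithful $R$-module $M$ satisfies the dual of proper strong Property $\mathcal{A}$. In particular, every $R$-module $M$ satisfies the dual of proper strong Property $\mathcal{A}$ as an $R/\mathrm{Ann}_R(M)$-module.
   Context: All rings are commutative with identity. For an $R$-module $M$, $W_R(M)=\{r\in R : rM\neq M\}$. $M$ satisfies the dual of proper strong Property $\mathcal{A}$ if for every proper finitely generated ideal $I=\langle a_1,\dots,a_n\rangle$ of $R$ with $a_i\in W_R(M)$ for all $i$, we have $IM\neq M$. *)

(* Defs.v *)
From HB Require Import structures.
From mathcomp Require Import all_boot all_order all_algebra.
Set Implicit Arguments. Unset Strict Implicit. Unset Printing Implicit Defensive.
Import GRing.Theory.
Local Open Scope ring_scope.

Definition is_ideal (R : comNzRingType) (I : R -> Prop) : Prop :=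
  I 0 /\ (forall a b, I a -> I b -> I (a + b)) /\ (forall r a, I a -> I (r * a)).

Definition prime_ideal (R : comNzRingType) (P : R -> Prop) : Prop :=
  is_ideal P /\ ~ P 1 /\ (forall a b, P (a * b) -> P a \/ P b).

Definition maximal_ideal (R : comNzRingType) (P : R -> Prop) : Prop :=
  is_ideal P /\ ~ P 1 /\
  (forall J : R -> Prop, is_ideal J -> (forall x, P x -> J x) ->
     (forall x, J x -> P x) \/ J 1).

Definition krull_dim_zero (R : comNzRingType) : Prop :=
  forall P : R -> Prop, prime_ideal P -> maximal_ideal P.

Definition gen_ideal (R : comNzRingType) (n : nat) (a : 'I_n -> R) (x : R) : Prop :=
  exists c : 'I_n -> R, x = \sum_(i < n) c i * a i.

Definition ideal_mod (R : comNzRingType) (M : lmodType R) (n : nat)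
  (a : 'I_n -> R) (m : M) : Prop :=
  exists f : 'I_n -> M, m = \sum_(i < n) a i *: f i.

Definition W_R (R : comNzRingType) (M : lmodType R) (r : R) : Prop :=
  ~ (forall m : M, exists m' : M, m = r *: m').

Definition faithful (R : comNzRingType) (M : lmodType R) : Prop :=
  forall r : R, (forall m : M, r *: m = 0) -> r = 0.

Definition dual_proper_strong_A (R : comNzRingType) (M : lmodType R) : Prop :=
  forall (n : nat) (a : 'I_n -> R),
    ~ gen_ideal a 1 ->
    (forall i, W_R M (a i)) ->
    ~ (forall m : M, ideal_mod a m).

(* Main.v *)
Require Import Defs.
From mathcomp Require Import all_boot all_order all_algebra.
From mathcomp Require Import boolp classical_sets ring.
From mathcomp Require Import zify.
Set Implicit Arguments. Unset Strict Implicit. Unset Printing Implicit Defensive.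
Import GRing.Theory.
Local Open Scope ring_scope.

Definition ext (R : comNzRingType) (A : R -> Prop) (c : R) (x : R) : Prop :=
  exists y r, A y /\ x = y + r * c.

Lemma ext_ideal (R : comNzRingType) (A : R -> Prop) c :
  is_ideal A -> is_ideal (ext A c).
Proof.
move=> [A0 [AD AM]]; split; [|split].
- by exists 0, 0; split => //; rewrite mul0r addr0.
- move=> x y [y1 [r1 [H1 ->]]] [y2 [r2 [H2 ->]]].
  exists (y1 + y2), (r1 + r2); split; [exact: AD|ring].
- move=> t x [y1 [r1 [H1 ->]]]; exists (t * y1), (t * r1); split; [exact: AM|ring].
Qed.

Lemma exists_prime (R : comNzRingType) (I S : R -> Prop) :
  is_ideal I -> S 1 -> (forall x y, S x -> S y -> S (x * y)) ->
  (forall x, I x -> ~ S x) ->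
  exists P, prime_ideal P /\ (forall x, I x -> P x) /\ (forall x, P x -> ~ S x).
Proof.
move=> Iid S1 SM IS.
pose Good (X : R -> Prop) := is_ideal X /\ (forall x, I x -> X x) /\ (forall x, X x -> ~ S x).
pose PP (X : set R) := (forall x, ~ X x) \/ Good X.
have GI : Good I by split; [|split].
have [A [PA Amax]] : exists A : set R, PP A /\ (forall B : set R, (A `<` B)%classic -> ~ PP B).
  apply: Zorn_bigcup => F FP Ftot.
  have [[X0 FX0 [x0 X0x0]]|Hne] := pselect (exists2 X, F X & exists x, X x); last first.
    left => x [X FX Xx]; apply: Hne; exists X => //; by exists x.
  have goodF X x : F X -> X x -> Good X.
    by move=> FX Xx; case: (FP X FX) => // /(_ x).
  have G0 := goodF _ _ FX0 X0x0.
  right; split; [split; [|split]|split].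
  - exists X0 => //; by case: G0 => [[]].
  - move=> a b [X FX Xa] [Y FY Yb].
    case: (Ftot X Y FX FY) => sub.
    + have GY := goodF _ _ FY Yb; exists Y => //; case: GY => [[_ [D _]] _].
      by apply: D => //; apply: sub.
    + have GX := goodF _ _ FX Xa; exists X => //; case: GX => [[_ [D _]] _].
      by apply: D => //; apply: sub.
  - move=> r a [X FX Xa]; exists X => //.
    by case: (goodF _ _ FX Xa) => [[_ [_ Mu]] _]; apply: Mu.
  - by move=> x Ix; exists X0 => //; case: G0 => [_ [H _]]; apply: H.
  - by move=> x [X FX Xx]; case: (goodF _ _ FX Xx) => [_ [_ H]]; apply: H.
have GA : Good A.
  case: PA => // A0; exfalso; apply: (Amax I); last by right.
  split; first by move=> x /A0.
  move=> IA; apply: (A0 0); apply: IA; by case: Iid.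
case: GA => [Aid [IA AS]].
exists A; split; last by split.
split => //; split; first by move=> /AS; apply.
move=> a b Aab; apply: contrapT => /not_orP [Aa Ab].
have hit c : ~ A c -> exists x, ext A c x /\ S x.
  move=> Ac; apply: contrapT => Hn.
  apply: (Amax (ext A c)).
    split.
      by move=> x Ax; exists x, 0; split => //; rewrite mul0r addr0.
    move=> sub; apply: Ac; apply: sub; exists 0, 1; split; last by rewrite add0r mul1r.
    by case: Aid.
  right; split; first exact: ext_ideal.
  split.
    by move=> x Ix; exists x, 0; split; [apply: IA|rewrite mul0r addr0].
  by move=> x Ex Sx; apply: Hn; exists x.
have [x [[y1 [r1 [Ay1 ->]]] Sx]] := hit a Aa.
have [z [[y2 [r2 [Ay2 ->]]] Sz]] := hit b Ab.
apply: (AS _ _ (SM _ _ Sx Sz)).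
case: Aid => [A0 [AD AM]].
have -> : (y1 + r1 * a) * (y2 + r2 * b) = (y1 * (y2 + r2 * b) + (r1 * a) * y2) + (r1 * r2) * (a * b) by ring.
apply: (AD); last exact: (AM).
apply: (AD); first by rewrite mulrC; apply: (AM).
exact: (AM).
Qed.

Lemma ann (R : comNzRingType) (M : lmodType R) n (a : 'I_n -> R) (s : R) k :
  (forall m : M, ideal_mod a m) -> (forall i, s * a i ^+ k = 0) ->
  forall m : M, s *: m = 0.
Proof.
move=> H Hs.
have step r : (forall i (m : M), (r * a i) *: m = 0) -> forall m : M, r *: m = 0.
  move=> Hr m; have [f ->] := H m.
  rewrite scaler_sumr big1 // => i _; by rewrite scalerA.
pose mono (e : 'I_n -> nat) := \prod_i a i ^+ e i.
pose mu (e : 'I_n -> nat) := (\sum_i (k - e i))%N.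
have monoS e j : mono (fun i => e i + (i == j))%N = mono e * a j.
  rewrite /mono (eq_bigr (fun i => a i ^+ e i * a i ^+ (i == j))); last by move=> i _; rewrite exprD.
  rewrite big_split /=; congr (_ * _).
  rewrite (bigD1 j) //= eqxx expr1 big1 ?mulr1 // => i /negbTE ->; by rewrite expr0.
have muS e j : (e j < k)%N -> (mu (fun i => e i + (i == j)) < mu e)%N.
  move=> ejk; rewrite /mu (bigD1 j) //= [X in (_ < X)%N](bigD1 j) //= eqxx.
  rewrite (eq_bigr (fun i => k - e i)%N); last by move=> i /negbTE ->; rewrite addn0.
  rewrite ltn_add2r; lia.
have main N : forall e, (mu e < N)%N -> forall m : M, (s * mono e) *: m = 0.
  elim: N => [//|N IH] e lt.
  have [/forallP allk|] := boolP [forall i, (e i < k)%N].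
    apply: step => j m; rewrite -mulrA -monoS; apply: IH.
    by have := muS e j (allk j); lia.
  rewrite negb_forall => /existsP [i]; rewrite -leqNgt => kei m.
  suff -> : s * mono e = 0 by rewrite scale0r.
  rewrite /mono (bigD1 i) //= -(subnKC kei) exprD.
  by rewrite mulrA mulrA Hs !mul0r.
move=> m; have := main (mu (fun=> 0%N)).+1 (fun=> 0%N) (ltnSn _) m.
by rewrite /mono big1 ?mulr1 // => i _; rewrite expr0.
Qed.

Lemma gen_ideal_is_ideal (R : comNzRingType) n (a : 'I_n -> R) : is_ideal (gen_ideal a).
Proof.
split; [|split].
- by exists (fun=> 0); rewrite big1 // => i _; rewrite mul0r.
- move=> x y [c ->] [d ->]; exists (fun i => c i + d i).
  by rewrite -big_split; apply: eq_bigr => i _; rewrite mulrDl.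
- move=> r x [c ->]; exists (fun i => r * c i).
  by rewrite mulr_sumr; apply: eq_bigr => i _; rewrite mulrA.
Qed.

Lemma gen_ideal_mem (R : comNzRingType) n (a : 'I_n -> R) i : gen_ideal a (a i).
Proof.
exists (fun j => (j == i)%:R).
rewrite (bigD1 i) //= eqxx mul1r big1 ?addr0 // => j /negbTE ->; by rewrite mul0r.
Qed.

Theorem proposition3p9 (R : comNzRingType) (M : lmodType R) :
  krull_dim_zero R -> faithful M -> dual_proper_strong_A M.
Proof.
move=> Hk Hf n a Hn1 _ H.
have [||P [Pp [IP _]]] := @exists_prime R (gen_ideal a) (fun x => x = 1)
  (gen_ideal_is_ideal a) erefl.
- by move=> x y -> ->; rewrite mulr1.
- by move=> x Ix x1; apply: Hn1; rewrite -x1.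
have PM := Hk P Pp.
case: (Pp) => [Pid [P1 Pprime]].
have notPM s t : ~ P s -> ~ P t -> ~ P (s * t).
  by move=> Ps Pt /Pprime [].
have loc i : exists p : R * nat, ~ P p.1 /\ p.1 * a i ^+ p.2 = 0.
  apply: contrapT => Hn.
  have h1 : is_ideal (fun x : R => x = 0).
    split; [done|split]; first by move=> x y -> ->; rewrite addr0.
    by move=> r x ->; rewrite mulr0.
  pose S0 := fun x => exists s k, ~ P s /\ x = s * a i ^+ k.
  have h2 : S0 1 by exists 1, 0%N; split => //; rewrite mulr1.
  have h3 : forall x y, S0 x -> S0 y -> S0 (x * y).
    move=> x y [s [k [Ps ->]]] [t [l [Pt ->]]].
    exists (s * t), (k + l)%N; split; first exact: notPM.
    by rewrite exprD; ring.
  have h4 : forall x, x = 0 -> ~ S0 x.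
    by move=> x -> [s [k [Ps E]]]; apply: Hn; exists (s, k); split.
  have [Q [Qp [_ QS]]] := exists_prime h1 h2 h3 h4.
  have QM := Hk Q Qp.
    case: QM => [_ [_ Qmax]].
    have QP : forall x, Q x -> P x.
      move=> x Qx; apply: contrapT => Px; apply: (QS x Qx).
      by exists x, 0%N; split => //; rewrite expr0 mulr1.
    case: (Qmax P Pid QP) => // PQ.
    apply: (QS (a i)); first by apply: PQ; apply: IP; apply: gen_ideal_mem.
    by exists 1, 1%N; split => //; rewrite mul1r expr1.
have [f Hfi] := choice loc.
pose s := \prod_i (f i).1.
pose k := (\max_i (f i).2)%N.
have Ps : ~ P s.
  apply: (big_ind (fun x => ~ P x)); [exact: P1|exact: notPM|].
  by move=> i _; case: (Hfi i).
have Hs i : s * a i ^+ k = 0.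
  rewrite /s (bigD1 i) //= /k -(subnKC (leq_bigmax i)) exprD.
  case: (Hfi i) => _ E.
  have -> : (f i).1 * (\prod_(j | j != i) (f j).1) * (a i ^+ (f i).2 * a i ^+ (k - (f i).2))
    = ((f i).1 * a i ^+ (f i).2) * ((\prod_(j | j != i) (f j).1) * a i ^+ (k - (f i).2)) by ring.
  by rewrite E mul0r.
apply: Ps.
have -> : s = 0 by apply: Hf; apply: (ann H Hs).
by case: Pid.
Qed.
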